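(* For every real $\lambda<\frac45$ there is $\nu_0(\lambda)$ such that, if $S$ is a numerical semigroup with minimal generators $a_1<a_2<\cdots<a_\nu$ such that $a_2>\frac{c(S)+\mu(S)}{3}$ and $\nu=\nu(S)\ge\nu_0(\lambda)$, then $$\nu(S)|L(S)|\ge\lambda\, c(S).$$
   Context: A numerical semigroup is a submonoid $S\subseteq\mathbb{N}$ with finite complement. $\nu(S)$ is the number of minimal generators, $\mu(S)=a_1$ the multiplicity, $c(S)$ the conductor (least integer with $c(S)+\mathbb{N}\subseteq S$), and $L(S)=\{x\in S:0\le x<c(S)\}$. *)

(* Defs.v *)
From Stdlib Require Import Reals.
From mathcomp Require Import all_boot.

Definition numerical_semigroup (S : pred nat) : Prop :=
  [/\ S 0,
      (forall x y, S x -> S y -> S (x + y)) &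
      exists N, forall n, N <= n -> S n].

Definition minimal_generator (S : pred nat) (x : nat) : Prop :=
  [/\ S x, 0 < x &
      ~ exists y z, [/\ 0 < y, 0 < z, S y, S z & x = y + z]].

(* a = [:: a_1; ...; a_nu] is the strictly increasing list of all minimal
   generators of S (so nu(S) = size a, mu(S) = a_1 = nth 0 a 0,
   a_2 = nth 0 a 1). *)
Definition minimal_generators (S : pred nat) (a : seq nat) : Prop :=
  sorted ltn a /\ forall x, x \in a <-> minimal_generator S x.

Definition conductor (S : pred nat) (c : nat) : Prop :=
  (forall n, c <= n -> S n) /\
  (forall d, (forall n, d <= n -> S n) -> c <= d).

Definition Lset (S : pred nat) (c : nat) : seq nat := [seq x <- iota 0 c | S x].

(* Main.v *)
Require Import Defs.
From Stdlib Require Import Reals Lra Classical.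
From mathcomp Require Import all_boot zify.

Definition E (S : pred nat) m e := [&& S e, m < e & ~~ S (e - m)].

Lemma Smul (S : pred nat) m b k :
  (forall x y, S x -> S y -> S (x + y)) -> S m -> S b -> S (b + k * m).
Proof.
move=> hadd hm hb; elim: k => [|k IH]; first by rewrite mul0n addn0.
by rewrite mulSn addnCA; apply: hadd.
Qed.

Lemma E_split (S : pred nat) m e u v :
  S 0 -> (forall x y, S x -> S y -> S (x + y)) ->
  (forall x, S x -> 0 < x -> m <= x) ->
  E S m e -> S u -> S v -> 0 < u -> 0 < v -> e = u + v -> E S m u.
Proof.
move=> h0 hadd hmin /and3P[Se me nSe] Su Sv u0 v0 euv.
have mu := hmin u Su u0.
apply/and3P; split => //.
  rewrite ltn_neqAle mu andbT; apply/eqP => emu.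
  by move: nSe; rewrite euv -emu addnC addnK Sv.
apply/negP => Sum; move: nSe; have -> : e - m = (u - m) + v by lia.
by rewrite hadd.
Qed.

Lemma not_gen_dec (S : pred nat) e : S e -> 0 < e -> ~ minimal_generator S e ->
  exists y z, [/\ 0 < y, 0 < z, S y, S z & e = y + z].
Proof. move=> Se e0 ng; apply: NNPP => H; apply: ng; by split. Qed.

Lemma T_mod_inj c m y y' : c <= y < c + m -> c <= y' < c + m ->
  y %% m = y' %% m -> y = y'.
Proof.
wlog le: y y' / y <= y' => [hw|] hy hy' e.
  by case: (leqP y y') => h; [apply: hw|symmetry; apply: hw => //; apply: ltnW].
have : m %| y' - y by rewrite -eqn_mod_dvd // e.
case: (posnP (y' - y)) => [|p]; first by lia.
by move/(dvdn_leq p); lia.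
Qed.

Lemma count_one (s : seq nat) (p : pred nat) B : uniq s ->
  (forall y y', y \in s -> y' \in s -> p y -> p y' -> y = y') ->
  \sum_(y <- s) p y * B <= B.
Proof.
elim: s => [|y s IH] /=; first by rewrite big_nil.
move=> /andP[ys us] h; rewrite big_cons.
case py: (p y) => /=.
  rewrite big1_seq ?addn0 ?mul1n // => z /andP[_ zs].
  case pz: (p z) => //=.
  have ezy : y = z by apply: h; rewrite ?mem_head ?inE ?zs ?orbT.
  by move: ys; rewrite ezy zs.
rewrite mul0n add0n; apply: IH => // z z' zs z's; apply: h; rewrite inE ?zs ?z's orbT //.
Qed.

Lemma term_le_sum (r : seq nat) k (f : nat -> nat) : k \in r -> f k <= \sum_(x <- r) f x.
Proof. by move=> kr; rewrite (big_rem k) //= leq_addr. Qed.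

Lemma sum_pairs (s : seq nat) (F : nat -> nat) (B : nat -> nat -> nat) (g : nat)
  (wit : nat -> nat -> nat -> bool) :
  uniq s ->
  (forall y, y \in s -> exists i j, [/\ i <= j, j < g, wit y i j & F y <= B i j]) ->
  (forall i j y y', y \in s -> y' \in s -> wit y i j -> wit y' i j -> y = y') ->
  \sum_(y <- s) F y <= \sum_(0 <= j < g) \sum_(0 <= i < j.+1) B i j.
Proof.
move=> us hex huniq.
apply: (@leq_trans (\sum_(y <- s) \sum_(0 <= j < g) \sum_(0 <= i < j.+1) wit y i j * B i j)).
  rewrite big_seq [X in _ <= X]big_seq; apply: leq_sum => y ys.
  have [i [j [ij jg w FB]]] := hex y ys.
  apply: (leq_trans FB).
  apply: (@leq_trans (\sum_(0 <= i0 < j.+1) wit y i0 j * B i0 j)).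
    have := @term_le_sum (index_iota 0 j.+1) i (fun i0 => wit y i0 j * B i0 j).
    rewrite w mul1n; apply; by rewrite mem_index_iota.
  apply: (@term_le_sum (index_iota 0 g) j (fun j0 => \sum_(0 <= i0 < j0.+1) wit y i0 j0 * B i0 j0)).
  by rewrite mem_index_iota.
rewrite exchange_big /=; apply: leq_sum => j _.
rewrite exchange_big /=; apply: leq_sum => i _.
apply: count_one => // y y' ys y's; exact: huniq.
Qed.

Lemma tri_sum (x : nat -> nat) g :
  \sum_(0 <= j < g) \sum_(0 <= i < j.+1) (x i + x j) = g.+1 * \sum_(0 <= i < g) x i.
Proof.
elim: g => [|g IH]; first by rewrite !big_geq.
rewrite big_nat_recr //= IH big_split /= sum_nat_const_nat subn0.
rewrite [\sum_(0 <= i < g.+1) x i]big_nat_recr //=.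
set X := \sum_(0 <= i < g) x i; lia.
Qed.

Set Implicit Arguments.
Record setup (S : pred nat) (m : nat) (G : seq nat) (c : nat) : Prop := Setup {
 s0 : S 0; sadd : forall x y, S x -> S y -> S (x+y); sc : forall n, c <= n -> S n;
 m0 : 0 < m; sm : S m; smin : forall x, S x -> 0 < x -> m <= x;
 ssort : sorted ltn (m :: G); sgen : forall x, x \in m :: G <-> minimal_generator S x;
 shyp : c + m < 3 * nth 0 G 0 }.


Lemma G_gt S m G c : setup S m G c -> forall x, x \in G -> m < x.
Proof.
move=> st x xG; have := order_path_min ltn_trans (ssort st).
by move/allP/(_ x xG).
Qed.

Lemma G_ge S m G c : setup S m G c -> forall x, x \in G -> nth 0 G 0 <= x.
Proof.
move=> st; have := ssort st; case: G st => [|g0 G'] st //= /andP[_ p] x.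
rewrite inE => /orP[/eqP->//|xG'].
have := order_path_min ltn_trans p; move/allP/(_ x xG'); exact: ltnW.
Qed.

Lemma G_E S m G c : setup S m G c -> forall x, x \in G -> E S m x.
Proof.
move=> st x xG; have mx := G_gt st x xG.
have [Sx x0 nd] : minimal_generator S x by apply/(sgen st); rewrite inE xG orbT.
apply/and3P; split => //; apply/negP => Sxm; apply: nd.
exists m, (x - m); split => //; [exact: m0 st|lia|exact: sm st|lia].
Qed.

Lemma E_ge S m G c : setup S m G c -> forall e, E S m e -> nth 0 G 0 <= e.
Proof.
move=> st e; elim: e {-2}e (leqnn e) => [|N IH] e he Ee.
  by move: Ee => /and3P[_]; lia.
have /and3P[Se me nS] := Ee.
case: (classic (minimal_generator S e)) => [mg|ng].
  apply: (G_ge st); move/(sgen st): mg; rewrite inE => /orP[/eqP emm|//].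
  by move: me; rewrite emm ltnn.
have [u [v [u0 v0 Su Sv euv]]] := @not_gen_dec S e Se (ltn_trans (m0 st) me) ng.
have Eu := @E_split S m e u v (s0 st) (sadd st) (smin st) Ee Su Sv u0 v0 euv.
have := IH u (_ : u <= N) Eu; lia.
Qed.

Lemma res_distinct S m G c b b' : setup S m G c -> S b -> E S m b' -> b < b' ->
  b %% m = b' %% m -> False.
Proof.
move=> st Sb /and3P[Sb' mb' nS] bb' e.
have : m %| b' - b by rewrite -eqn_mod_dvd ?(ltnW bb') // e.
case/dvdnP => k hk.
have k0 : 0 < k by case: k hk => [|k]; lia.
move: nS; have -> : b' - m = b + k.-1 * m.
  by move: hk; rewrite -(prednK k0) mulSn /=; lia.
by rewrite (@Smul S m b k.-1 (sadd st) (sm st) Sb).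
Qed.
Set Implicit Arguments. Unset Strict Implicit.

Lemma gen_or_split S m G c u : setup S m G c -> E S m u ->
  u \in G \/ exists u1 u2, [/\ E S m u1, E S m u2 & u = u1 + u2].
Proof.
move=> st Eu; have /and3P[Su mu nS] := Eu.
case: (classic (minimal_generator S u)) => [mg|ng].
  left; move/(sgen st): mg; rewrite inE => /orP[/eqP emm|//].
  by move: mu; rewrite emm ltnn.
right; have [u1 [u2 [p1 p2 S1 S2 e]]] := @not_gen_dec S u Su (ltn_trans (m0 st) mu) ng.
exists u1, u2; split => //.
  exact: (@E_split S m u u1 u2 (s0 st) (sadd st) (smin st) Eu S1 S2 p1 p2 e).
apply: (@E_split S m u u2 u1 (s0 st) (sadd st) (smin st) Eu S2 S1 p2 p1).
by rewrite addnC.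
Qed.

Lemma E_in_G S m G c u v y : setup S m G c -> E S m u -> E S m v -> u + v <= y -> y < c + m ->
  u \in G.
Proof.
move=> st Eu Ev uvy yc.
case: (gen_or_split st Eu) => // [[u1 [u2 [E1 E2 e]]]].
have := E_ge st _ E1; have := E_ge st _ E2; have := E_ge st _ Ev; have := shyp st; lia.
Qed.

Lemma pair_lemma S m G c y : setup S m G c -> c <= y < c + m ->
  (y %% m) \notin (0 :: map (modn^~ m) G) ->
  exists i j, [/\ i <= j, j < size G, nth 0 G i + nth 0 G j <= y &
                (nth 0 G i + nth 0 G j) %% m == y %% m].
Proof.
move=> st /andP[cy yc] hR.
have ex : exists z, [&& S z, z <= y & z %% m == y %% m].
  by exists y; rewrite (sc st) ?leqnn ?eqxx.
case: (ex_minnP ex) => w /and3P[Sw wy wmod] wmin.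
have w0 : 0 < w.
  rewrite lt0n; apply/eqP => w0; move: hR; rewrite -(eqP wmod) w0 mod0n inE eqxx.
  by [].
have mw := smin st w Sw w0.
have m0' := m0 st.
have nS : ~~ S (w - m).
  apply/negP => Swm.
  have wm : w %% m = (w - m) %% m by rewrite -{1}(subnK mw) modnDr.
  have := wmin (w - m); rewrite Swm -wm wmod (leq_trans (leq_subr _ _) wy) /=.
  move=> /(_ isT); lia.
have mw' : m < w.
  rewrite ltn_neqAle mw andbT; apply/eqP => emw; move: nS.
  by rewrite -emw subnn (s0 st).
have Ew : E S m w by apply/and3P.
case: (gen_or_split st Ew) => [wG|[u [v [Eu Ev e]]]].
  by move: hR; rewrite -(eqP wmod) inE (map_f (modn^~ m) wG) orbT.
have uG : u \in G by apply: (E_in_G st Eu Ev _ yc); rewrite -e.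
have vG : v \in G by apply: (E_in_G st Ev Eu _ yc); rewrite addnC -e.
case: (leqP (index u G) (index v G)) => h.
  exists (index u G), (index v G); rewrite !nth_index // -e wmod; split => //.
  by rewrite index_mem.
exists (index v G), (index u G); rewrite !nth_index // addnC -e wmod; split => //.
  exact: ltnW.
by rewrite index_mem.
Qed.
Set Implicit Arguments. Unset Strict Implicit.

Definition bnd m c b := (c - b + m.-1) %/ m.

Lemma bnd_lt m c b j : 0 < m -> j < bnd m c b -> b + j * m < c.
Proof.
move=> m0 hj; have := leq_trunc_div (c - b + m.-1) m.
rewrite -/(bnd m c b) => h.
have : j.+1 * m <= bnd m c b * m by rewrite leq_mul2r hj orbT.
rewrite mulSn; lia.
Qed.

Lemma bnd_ge m c b : 0 < m -> c - b <= m * bnd m c b.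
Proof.
move=> m0; have := divn_eq (c - b + m.-1) m; have := ltn_pmod (c - b + m.-1) m0.
rewrite -/(bnd m c b) mulnC; lia.
Qed.

Lemma bnd_pos m c b : 0 < m -> b < c -> 0 < bnd m c b.
Proof. by move=> m0 bc; rewrite /bnd leq_divRL // mul1n; lia. Qed.

Lemma flat_uniq m c (bs : seq nat) : 0 < m -> uniq (map (modn^~ m) bs) ->
  uniq (flatten [seq [seq b + j * m | j <- iota 0 (bnd m c b)] | b <- bs]).
Proof.
move=> m0; elim: bs => [|b bs IH] //= /andP[nb ub].
rewrite cat_uniq IH // andbT; apply/andP; split.
  rewrite map_inj_uniq ?iota_uniq // => j j' /eqP.
  by rewrite eqn_add2l eqn_pmul2r // => /eqP.
apply/hasPn => z /flatten_mapP [b' b'bs /mapP [j _ ->]].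
apply/negP => /mapP [j' _ e].
have : (b' + j * m) %% m = (b + j' * m) %% m by rewrite e.
rewrite ![_ + _ * m]addnC !modnMDl => em.
by move: nb; rewrite -em (map_f (modn^~ m) b'bs).
Qed.

Lemma Lbound S m G c : setup S m G c ->
  bnd m c 0 + sumn (map (bnd m c) G) <= size (Lset S c).
Proof.
move=> st; have m0 := m0 st.
set bs := 0 :: G.
have sG : sorted ltn G by have := ssort st; move/path_sorted.
have uG : uniq G := sorted_uniq ltn_trans ltnn sG.
have Sbs : forall b, b \in bs -> S b.
  move=> b; rewrite inE => /orP[/eqP->|bG]; first exact: s0 st.
  by have /and3P[] := G_E st b bG.
have ubs : uniq (map (modn^~ m) bs).
  rewrite map_inj_in_uniq.
    rewrite /bs /= uG andbT; apply/negP => /(G_gt st); lia.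
  have key : forall b b', b \in bs -> b' \in bs -> b < b' -> b %% m = b' %% m -> False.
    move=> b b' hb hb' bb' e.
    have b'G : b' \in G by move: hb'; rewrite inE => /orP[/eqP e'|//]; lia.
    exact: (res_distinct b b' st (Sbs b hb) (G_E st b' b'G) bb' e).
  move=> b b' hb hb' e; case: (ltngtP b b') => // h.
    by case: (key b b' hb hb' h e).
  by case: (key b' b hb' hb h (esym e)).
have U := flat_uniq c m0 ubs.
have := uniq_leq_size U (_ : {subset _ <= Lset S c}).
rewrite size_flatten /shape -map_comp.
have -> : [seq (size \o (fun b => [seq b + j * m | j <- iota 0 (bnd m c b)])) i | i <- bs]
   = map (bnd m c) bs by apply: eq_map => b /=; rewrite size_map size_iota.
apply.
move=> z /flatten_mapP [b bbs /mapP [j hj ->]].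
rewrite mem_filter mem_iota /= add0n.
move: hj; rewrite mem_iota add0n => /andP[_ hj].
rewrite (bnd_lt m0 hj) andbT.
exact: (@Smul S m b j (sadd st) (sm st) (Sbs b bbs)).
Qed.

Lemma Mbound S m G c : setup S m G c ->
  m <= (size G).+1 + size [seq y <- iota c m | y %% m \notin 0 :: map (modn^~ m) G].
Proof.
move=> st; set R := 0 :: map (modn^~ m) G.
rewrite size_filter.
apply: (@leq_trans (count (fun y => y %% m \in R) (iota c m) + count (predC (fun y => y %% m \in R)) (iota c m))).
  by rewrite count_predC size_iota.
apply: leq_add; last exact: leqnn.
have -> : count (fun y => y %% m \in R) (iota c m) = count (mem R) (map (modn^~ m) (iota c m)).
  by rewrite count_map.
rewrite -size_filter.
have -> : (size G).+1 = size R by rewrite /R /= size_map.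
apply: uniq_leq_size; last by move=> z; rewrite mem_filter => /andP[].
apply: filter_uniq; rewrite map_inj_in_uniq ?iota_uniq // => y y'.
rewrite !mem_iota => hy hy'. exact: (@T_mod_inj c m y y' hy hy').
Qed.

Lemma tri2 c m : 2 * \sum_(y <- iota c m) (y - c) <= m * m.
Proof.
elim: m => [|m IH]; first by rewrite big_nil.
have -> : iota c m.+1 = iota c m ++ [:: c + m] by rewrite -addn1 iotaD.
rewrite big_cat big_seq1 /=; lia.
Qed.
Set Implicit Arguments. Unset Strict Implicit.

Lemma main_nat S m G c : setup S m G c ->
  4 * c <= 5 * ((size G).+1 * size (Lset S c)).
Proof.
move=> st; have m0 := m0 st.
set g := size G; set n := size (Lset S c).
set R := 0 :: map (modn^~ m) G.
set Ps := [seq y <- iota c m | y %% m \notin R].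
set P := size Ps.
set x := fun i => bnd m c (nth 0 G i).
set X := \sum_(0 <= i < g) x i.
set q := bnd m c 0.
have hN : q + X <= n.
  have := Lbound st; rewrite sumnE big_map (big_nth 0) /=.
  by rewrite big_mkcond /= -/g.
have hq : c <= m * q by have := bnd_ge c 0 m0; rewrite subn0.
have hM : m <= g.+1 + P := Mbound st.
have uPs : uniq Ps by rewrite filter_uniq // iota_uniq.
have memPs : forall y, y \in Ps -> c <= y < c + m /\ y %% m \notin R.
  by move=> y; rewrite mem_filter mem_iota => /andP[].
pose wit y i j := (nth 0 G i + nth 0 G j <= y) && ((nth 0 G i + nth 0 G j) %% m == y %% m).
have wuniq : forall i j y y', y \in Ps -> y' \in Ps -> wit y i j -> wit y' i j -> y = y'.
  move=> i j y y' /memPs [hy _] /memPs [hy' _] /andP[_ /eqP e] /andP[_ /eqP e'].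
  by apply: (@T_mod_inj c m y y' hy hy'); rewrite -e -e'.
have wex : forall y, y \in Ps -> exists i j, [/\ i <= j, j < g, wit y i j &
     [/\ 0 < x i, 0 < x j, c - nth 0 G i <= m * x i & c - nth 0 G j <= m * x j]].
  move=> y /memPs [hy hR].
  have [i [j [ij jg s1 s2]]] := pair_lemma st hy hR.
  exists i, j; split => //; first by rewrite /wit s1 s2.
  have iG : nth 0 G i \in G by apply: mem_nth; exact: leq_ltn_trans ij jg.
  have jG : nth 0 G j \in G by apply: mem_nth.
  have := G_gt st _ iG; have := G_gt st _ jG => gi gj.
  split; try exact: bnd_ge; apply: bnd_pos => //; lia.
have hA : 2 * P <= g.+1 * X.
  have := @sum_pairs Ps (fun _ => 2) (fun i j => x i + x j) g wit uPs.
  rewrite tri_sum -/X big_const_seq count_predT iter_addn_0 -/P; apply => //.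
  move=> y yP; have [i [j [ij jg w [p1 p2 _ _]]]] := wex y yP.
  by exists i, j; split => //; lia.
have hB : \sum_(y <- Ps) (2 * c - y) <= m * (g.+1 * X).
  have := @sum_pairs Ps (fun y => 2 * c - y) (fun i j => m * x i + m * x j) g wit uPs.
  rewrite (tri_sum (fun i => m * x i)) -big_distrr /= -/X mulnCA; apply => //.
  move=> y yP; have [i [j [ij jg w [_ _ b1 b2]]]] := wex y yP.
  exists i, j; split => //; move: w => /andP[s _]; lia.
have hC : P * c <= \sum_(y <- Ps) (2 * c - y) + \sum_(y <- Ps) (y - c).
  rewrite -big_split /=.
  have -> : P * c = \sum_(y <- Ps) c by rewrite big_const_seq count_predT iter_addn_0 mulnC.
  rewrite big_seq [X in _ <= X]big_seq; apply: leq_sum => y /memPs [hy _]; lia.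
have hD : 2 * \sum_(y <- Ps) (y - c) <= m * m.
  apply: leq_trans (tri2 c m); rewrite leq_mul2l /= /Ps big_filter.
  by rewrite [X in _ <= X](bigID (fun y => y %% m \notin R)) /= leq_addr.
set S1 := \sum_(y <- Ps) (2 * c - y) in hB hC.
set S2 := \sum_(y <- Ps) (y - c) in hC hD.
have hnu : g.+1 * q + g.+1 * X <= g.+1 * n by rewrite -mulnDr leq_mul2l hN orbT.
case: (leqP q 1) => hq1.
  have : c <= g.+1 * n by nia.
  lia.
case: (leqP (2 * c) (5 * m)) => hcm.
  have : 2 * m <= g.+1 * n by nia.
  lia.
have h1 : m * c <= m * (g.+1 * n) + S2.
  have : m * (g.+1 * q) + m * (g.+1 * X) <= m * (g.+1 * n) by rewrite -mulnDr leq_mul2l hnu orbT.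
  have : g.+1 * c <= m * (g.+1 * q) by rewrite mulnCA leq_mul2l hq orbT.
  have : m * c <= (g.+1 + P) * c by rewrite leq_mul2r hM orbT.
  nia.
have h2 : 2 * c <= 2 * (g.+1 * n) + m.
  have : m * (2 * c) <= m * (2 * (g.+1 * n) + m) by nia.
  by rewrite leq_pmul2l.
lia.
Qed.
Unset Implicit Arguments. Set Strict Implicit.

Theorem proposition4p9 (lam : R) :
  Rlt lam (Rdiv 4 5) ->
  exists nu0 : nat,
    forall (S : pred nat) (a : seq nat) (c : nat),
      numerical_semigroup S ->
      minimal_generators S a ->
      conductor S c ->
      (* a_2 > (c(S) + mu(S)) / 3, with mu(S) = a_1 *)
      c + nth 0 a 0 < 3 * nth 0 a 1 ->
      nu0 <= size a ->
      Rle (Rmult lam (INR c)) (INR (size a * size (Lset S c))).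
Proof.
move=> hlam; exists 0 => S a c [h0 hadd _] [hsort hgen] [hc _] hyp _.
case: a hsort hgen hyp => [|m G] hsort hgen hyp; first by move: hyp; rewrite /= muln0.
have [Sm m0 _] : minimal_generator S m by apply/hgen; rewrite mem_head.
have smin : forall x, S x -> 0 < x -> m <= x.
  move=> x Sx x0.
  have ex : exists z, (0 < z) && S z by exists x; rewrite x0 Sx.
  case: (ex_minnP ex) => z /andP[z0 Sz] zmin.
  have mg : minimal_generator S z.
    split => // -[y [w [y0 w0 Sy Sw e]]].
    have := zmin y; rewrite y0 Sy => /(_ isT); lia.
  move/hgen: mg; rewrite inE => /orP[/eqP zm|zG].
    by rewrite -zm; apply: zmin; rewrite x0 Sx.
  have := order_path_min ltn_trans hsort; move/allP/(_ z zG) => mz.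
  have := zmin x; rewrite x0 Sx => /(_ isT); lia.
have st : setup S m G c by split.
have H := main_nat st.
have HR : Rle (INR (4 * c)) (INR (5 * ((size G).+1 * size (Lset S c)))) by apply/le_INR/leP.
rewrite -!multE !mult_INR in HR.
have e4 : INR 4 = IZR 4 by simpl; lra.
have e5 : INR 5 = IZR 5 by simpl; lra.
rewrite e4 e5 in HR.
have c0 := pos_INR c.
rewrite -multE mult_INR.
set K1 := INR (size G).+1 in HR *. set K2 := INR (size (Lset S c)) in HR *.
set C := INR c in HR c0 *.
nra.
Qed.
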